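(* Let $m,k\in\mathbb{N}$ and let $\beta,\gamma\in\mathbb{C}$ with $\beta-k-1,\ -m-k-\gamma,\ \beta-\gamma-m-k\notin\mathbb{Z}_0^-$. Then \[ {}_3F_2\left[\begin{array}{r} -m,\ \beta-k-1,\ -m-k-\gamma;\\ -m-k,\ \beta-\gamma-m-k;\end{array}1\right]_m=\frac{\left(\beta\right)_m\left(\gamma\right)_m}{\left(1+k\right)_m\left(1+k+\gamma-\beta\right)_m}. \]
   Context: $\mathbb{N}=\{1,2,3,\dots\}$, $\mathbb{Z}_0^-=\{0,-1,-2,\dots\}$. For $a\in\mathbb{C}$ and $n\in\mathbb{N}_0$, $(a)_0=1$ and $(a)_n=a(a+1)\cdots(a+n-1)$. For $N\in\mathbb{N}_0$, ${}_3F_2\left[\begin{array}{r} a_1,a_2,a_3;\\ b_1,b_2;\end{array}z\right]_N=\sum_{n=0}^{N}\frac{(a_1)_n(a_2)_n(a_3)_n}{(b_1)_n(b_2)_n}\frac{z^n}{n!}$ (the sum of the first $N+1$ terms), defined whenever $(b_1)_n(b_2)_n\neq0$ for $0\le n\le N$. *)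

(* Defs.v *)
From HB Require Import structures.
From mathcomp Require Import all_boot all_order all_algebra.
From mathcomp Require Import complex.
From mathcomp Require Import Rstruct.
From Stdlib Require Import Reals.
Set Implicit Arguments. Unset Strict Implicit. Unset Printing Implicit Defensive.
Import Order.TTheory GRing.Theory Num.Theory.
Local Open Scope ring_scope.

Notation CC := (complex Rdefinitions.R).

Definition poch (a : CC) (n : nat) : CC := \prod_(i < n) (a + i%:R).

Definition nonpos_int (z : CC) : Prop := exists n : nat, z = - (n%:R).

Definition F32_trunc (a1 a2 a3 b1 b2 z : CC) (N : nat) : CC :=
  \sum_(n < N.+1) (poch a1 n * poch a2 n * poch a3 n)
                   / (poch b1 n * poch b2 n) * z ^+ n / (n`!)%:R.

(* Main.v *)
Require Import Defs.
From mathcomp Require Import all_boot all_order all_algebra complex Rstruct.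
From mathcomp Require Import ring lra zify.
Set Implicit Arguments. Unset Strict Implicit. Unset Printing Implicit Defensive.
Import Order.TTheory GRing.Theory Num.Theory.
Local Open Scope ring_scope.

Ltac cring := apply: subr0_eq; ring.

Lemma poch0 x : poch x 0 = 1.
Proof. by rewrite /poch big_ord0. Qed.

Lemma pochS x n : poch x n.+1 = poch x n * (x + n%:R).
Proof. by rewrite /poch big_ord_recr. Qed.

Lemma pochSl x n : poch x n.+1 = x * poch (x + 1) n.
Proof.
rewrite /poch big_ord_recl addr0; congr (_ * _).
by apply: eq_bigr => i _; rewrite lift0 /= -natr1; cring.
Qed.

Definition Tt (a b c : CC) n j : CC := ('C(n,j))%:R * poch a j * poch b j *
  poch (c + j%:R) (n - j) * poch (c - a - b) (n - j).

Definition Ht (a b c : CC) n j : CC := match j with 0 => 0 | j'.+1 =>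
  - ('C(n,j'))%:R * poch a j'.+1 * poch b j'.+1 * poch (c + j'%:R) (n - j')
  * poch (c - a - b) (n - j') end.

Lemma step a b c n j : (j <= n.+1)%N ->
  Tt a b c n.+1 j - (c - a + n%:R) * (c - b + n%:R) * Tt a b c n j
  = Ht a b c n j.+1 - Ht a b c n j.
Proof.
rewrite /Tt /Ht.
case: j => [|j] hj.
  rewrite !poch0 !subn0 bin0 /= !pochS !bin0 !addr0.
  rewrite !poch0. cring.
rewrite leq_eqVlt in hj; case/orP: hj => [/eqP [->]|hj].
  rewrite !subnn !binn (bin_small (ltnSn n)) !poch0; cring.
have [r ->] : exists r, n = (j.+1 + r)%N by exists (n - j.+1)%N; rewrite subnKC // -ltnS.
rewrite binS.
have rel := mul_bin_left (j.+1 + r) j.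
have e1 : ((j.+1 + r).+1 - j.+1 = r.+1)%N by lia.
have e2 : (j.+1 + r - j.+1 = r)%N by lia.
have e3 : (j.+1 + r - j = r.+1)%N by lia.
rewrite e1 e2 e3 in rel *.
move/(congr1 (fun x : nat => x%:R : CC)): rel; rewrite !natrM => rel.
rewrite [('C(_, _) + _)%:R]natrD (pochSl (c + j%:R)) !pochS.
have -> : c + j%:R + 1 = c + j.+1%:R by rewrite -natr1 addrA.
set u := ('C(j.+1 + r, j.+1))%:R : CC in rel *.
set v := ('C(j.+1 + r, j))%:R : CC in rel *.
set X := poch a j.+1 * poch b j.+1 * poch (c + j.+1%:R) r * poch (c - a - b) r.
rewrite [(j.+1 + r)%:R]natrD.
apply: subr0_eq.
apply: (@eq_trans _ _ (X * (c - a - b + r%:R) * (v * r.+1%:R - j.+1%:R * u))).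
  rewrite /X /u /v !pochS -[j.+1%:R]natr1 -[r.+1%:R]natr1. ring.
by rewrite [v * _]mulrC rel subrr mulr0.
Qed.

Lemma saal a b c n : \sum_(j < n.+1) Tt a b c n j = poch (c-a) n * poch (c-b) n.
Proof.
elim: n => [|n IH].
  by rewrite big_ord1 /Tt !poch0 bin0 !mulr1.
set K := (c - a + n%:R) * (c - b + n%:R).
have H0 : \sum_(j < n.+2) (Tt a b c n.+1 j - K * Tt a b c n j) = 0.
  rewrite -(big_mkord (fun _ => true) (fun j => Tt a b c n.+1 j - K * Tt a b c n j)) /=.
  rewrite (@telescope_sumr_eq _ 0 n.+2 (Ht a b c n)) //.
    rewrite /Ht (bin_small (ltnSn n)). by rewrite mulr0n oppr0 !mul0r addr0.
  move=> k /andP [_ hk]; exact: step.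
rewrite sumrB -mulr_sumr [X in _ - K * X]big_ord_recr /= in H0.
have T0 : Tt a b c n n.+1 = 0 by rewrite /Tt (bin_small (ltnSn n)) !mul0r.
rewrite T0 in H0.
move/subr0_eq: H0; rewrite addr0 IH => ->.
rewrite !pochS /K; cring.
Qed.

Lemma poch_refl x n : poch (1 - x - n%:R) n = (-1) ^+ n * poch x n.
Proof.
elim: n x => [|n IH] x; first by rewrite !poch0 expr0 mulr1.
rewrite pochSl.
have -> : 1 - x - n.+1%:R + 1 = 1 - x - n%:R by rewrite -natr1; cring.
by rewrite IH pochS exprS -natr1; cring.
Qed.

Lemma poch_split x j r : poch x (j + r) = poch x j * poch (x + j%:R) r.
Proof.
elim: r => [|r IH]; first by rewrite addn0 poch0 mulr1.
by rewrite addnS !pochS IH natrD; cring.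
Qed.

Lemma poch_negm m j : (j <= m)%N ->
  poch (- m%:R) j = (-1) ^+ j * ('C(m, j) * j`!)%:R.
Proof.
elim: j => [|j IH] hj; first by rewrite poch0 expr0 bin0 fact0 mul1r.
rewrite pochS IH ?(ltnW hj) // factS.
have rel := mul_bin_left m j.
have -> : ('C(m, j.+1) * (j.+1 * j`!) = (m - j) * 'C(m, j) * j`!)%N.
  by rewrite mulnA (mulnC _ j.+1) rel.
rewrite !natrM natrB ?(ltnW hj) // exprS; cring.
Qed.

Lemma poch_neq0 x n : (forall i, (i < n)%N -> x + i%:R != 0) -> poch x n != 0.
Proof.
elim: n => [|n IH] h; first by rewrite poch0 oner_eq0.
rewrite pochS mulf_neq0 //; first by apply: IH => i hi; apply: h; exact: ltnW.
exact: h.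
Qed.

Theorem mainTheorem4 (m k : nat) (beta gamma : CC)
  (hm : (0 < m)%N) (hk : (0 < k)%N)
  (h1 : ~ nonpos_int (beta - k%:R - 1))
  (h2 : ~ nonpos_int (- m%:R - k%:R - gamma))
  (h3 : ~ nonpos_int (beta - gamma - m%:R - k%:R)) :
  F32_trunc (- m%:R) (beta - k%:R - 1) (- m%:R - k%:R - gamma)
            (- m%:R - k%:R) (beta - gamma - m%:R - k%:R) 1 m
  = (poch beta m * poch gamma m)
    / (poch (1 + k%:R) m * poch (1 + k%:R + gamma - beta) m).
Proof.
set a := beta - k%:R - 1.
set b := - m%:R - k%:R - gamma.
set c := - m%:R - k%:R.
set d := beta - gamma - m%:R - k%:R.
set g := c - a - b.
have hg : g = 1 + k%:R + gamma - beta by rewrite /g /a /b /c; cring.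
have hd : forall j : nat, (j <= m)%N -> d + j%:R = 1 - g - (m - j)%:R.
  by move=> j hj; rewrite natrB // hg /d; cring.
have cm0 : poch c m != 0.
  apply: poch_neq0 => i hi; apply/negP => /eqP e.
  have : i%:R = (m + k)%:R :> CC.
    by rewrite natrD; apply: subr0_eq; rewrite -e /c; cring.
  move/eqP; rewrite eqr_nat => /eqP ei; move: hi; rewrite ei; lia.
have dm0 : poch d m != 0.
  apply: poch_neq0 => i hi; apply/negP => /eqP e.
  apply: h3; exists i; apply: subr0_eq; rewrite opprK -e /d; cring.
have term : forall j : 'I_m.+1,
    poch (- m%:R) j * poch a j * poch b j / (poch c j * poch d j) * 1 ^+ j
      / (j`!)%:R
    = (-1) ^+ m * Tt a b c m j / (poch c m * poch d m).
  case=> j /= hj; rewrite ltnS in hj.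
  rewrite poch_negm // expr1n mulr1.
  have sc := poch_split c j (m - j); rewrite subnKC // in sc.
  have sd := poch_split d j (m - j); rewrite subnKC // in sd.
  rewrite sd (hd j hj) poch_refl in dm0 *.
  rewrite sc in cm0 *.
  have em : (-1) ^+ m = (-1) ^+ j * (-1) ^+ (m - j) :> CC by rewrite -exprD subnKC.
  rewrite /Tt em.
  move: cm0 dm0; rewrite !mulf_eq0 !negb_or => /andP [c1 c2] /andP [d1 /andP [d2 d3]].
  have f0 : (j`!)%:R != 0 :> CC by rewrite pnatr_eq0 -lt0n fact_gt0.
  rewrite natrM.
  move: c1 c2 d1 d2 d3 f0.
  move: (poch c j) (poch (c + j%:R) (m - j)) (poch d j) ((-1) ^+ (m - j) : CC)
    (poch g (m - j)) ((j`!)%:R : CC) => C1 C2 D1 S2 G F c1 c2 d1 d2 d3 f0.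
  apply: subr0_eq. field. by rewrite c1 c2 d1 d2 d3 f0.
rewrite /F32_trunc (eq_bigr _ (fun j _ => term j)) -mulr_suml -mulr_sumr saal.
have e1 : c - a = 1 - beta - m%:R by rewrite /c /a; cring.
have e2 : c - b = gamma by rewrite /c /b; cring.
have e3 : c = 1 - (1 + k%:R) - m%:R by rewrite /c; cring.
have e4 : d = 1 - (1 + k%:R + gamma - beta) - m%:R.
  by rewrite -hg; have := hd 0%N (leq0n m); rewrite addr0 subn0.
rewrite e1 e2 poch_refl.
rewrite e3 poch_refl in cm0 *.
rewrite e4 poch_refl in dm0 *.
move: cm0 dm0; rewrite !mulf_eq0 !negb_or => /andP [s1 p1] /andP [_ p2].
move: s1 p1 p2; move: ((-1) ^+ m : CC) (poch beta m) (poch gamma m)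
  (poch (1 + k%:R) m) (poch (1 + k%:R + gamma - beta) m) => S B G K1 K2 s1 p1 p2.
apply: subr0_eq; field. by rewrite s1 p1 p2.
Qed.
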